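(* Let $G$ and $H$ be graphs such that the direct product $G\times H$ is a balanced distance magic graph, and let $\ell$ be a balanced distance magic labeling of $G\times H$ in which $(g,h)$ and $(g',h)$ are twins and also $(g,h_1)$ and $(g,h_2)$ are twins. Let $\widehat\ell$ be obtained from $\ell$ by exchanging the labels of $(g,h_2)$ and $(g',h_1)$, i.e. $\widehat\ell(g,h_2)=\ell(g',h_1)$, $\widehat\ell(g',h_1)=\ell(g,h_2)$, and $\widehat\ell(a,b)=\ell(a,b)$ for all other vertices. Then $\widehat\ell$ is a balanced distance magic labeling of $G\times H$ in which $(g,h_1)$ and $(g',h_1)$ are twins.
   Context: All graphs are finite and simple. For a graph $G$ and vertex $x$, $N(x)=N_G(x)$ is the (open) neighborhood of $x$. A distance magic labeling of a graph $G$ of order $N$ is a bijection $\ell\colon V(G)\to\{1,\dots,N\}$ for which there is a constant $k$ such that the weight $w(x)=\sum_{y\in N(x)}\ell(y)$ equals $k$ for every $x\in V(G)$. A balanced distance magic labeling of a graph $G$ with an even number $N$ of vertices is a distance magic labeling $\ell$ such that for every $w\in V(G)$: whenever $u\in N(w)$ has $\ell(u)=i$, there is $v\in N(w)$ with $\ell(v)=N+1-i$. Under such $\ell$, the vertices labeled $i$ and $N+1-i$ are called twins (with respect to $\ell$). $G$ is a balanced distance magic graph if it has an even number of vertices and admits a balanced distance magic labeling. The direct product $G\times H$ has vertex set $V(G)\times V(H)$, with $(g,h)$ adjacent to $(g',h')$ iff $gg'\in E(G)$ and $hh'\in E(H)$. *)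

(* Defs.v *)
From mathcomp Require Import all_boot.
Set Implicit Arguments. Unset Strict Implicit. Unset Printing Implicit Defensive.

Definition simple_graph (T : finType) (e : rel T) : Prop :=
  symmetric e /\ irreflexive e.

Definition direct_prod (T1 T2 : finType) (e1 : rel T1) (e2 : rel T2)
  : rel (T1 * T2) :=
  fun x y => e1 x.1 y.1 && e2 x.2 y.2.

Definition weight (T : finType) (e : rel T) (l : T -> nat) (x : T) : nat :=
  \sum_(y | e x y) l y.

(* l is a bijection V -> {1,...,N}, N = |V|. *)
Definition is_labeling (T : finType) (l : T -> nat) : Prop :=
  injective l /\ (forall x, 1 <= l x <= #|T|).

Definition distance_magic_labeling (T : finType) (e : rel T) (l : T -> nat) : Prop :=
  is_labeling l /\ exists k, forall x, weight e l x = k.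

Definition balanced_dm_labeling (T : finType) (e : rel T) (l : T -> nat) : Prop :=
  ~~ odd #|T| /\ distance_magic_labeling e l /\
  (forall w u, e w u -> exists2 v, e w v & l v = #|T| + 1 - l u).

Definition balanced_dm_graph (T : finType) (e : rel T) : Prop :=
  exists l, balanced_dm_labeling e l.

Definition twins (T : finType) (l : T -> nat) (x y : T) : Prop :=
  l x + l y = #|T| + 1.

Definition swap_labels (T : finType) (l : T -> nat) (a b : T) : T -> nat :=
  fun x => if x == a then l b else if x == b then l a else l x.

(* Main.v *)
Require Import Defs.
From mathcomp Require Import all_boot.
Set Implicit Arguments. Unset Strict Implicit.

Lemma twin_nbr (T:finType) (e:rel T) (l : T -> nat) :
  balanced_dm_labeling e l -> forall u v, twins l u v -> forall w, e w u -> e w v.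
Proof.
move=> [_ [[[linj _] _] Hb]] u v Huv w ewu.
have [v' ewv' lv'] := Hb w u ewu.
suff -> : v = v' by [].
apply: linj; rewrite lv'; move: Huv; rewrite /twins => <-.
by rewrite addKn.
Qed.

Lemma twin_nbrE (T:finType) (e:rel T) (l : T -> nat) :
  balanced_dm_labeling e l -> forall u v, twins l u v -> forall w, e w u = e w v.
Proof.
move=> Hl u v Huv w; apply/idP/idP; first exact: (twin_nbr Hl Huv).
move=> H; apply: (twin_nbr Hl (u:=v) (v:=u) _ H). by rewrite /twins addnC.
Qed.

Lemma twin_neq (T:finType) (e:rel T) (l : T -> nat) :
  balanced_dm_labeling e l -> forall u v, twins l u v -> u != v.
Proof.
move=> [Hev _] u v; rewrite /twins => H; apply/eqP => E; subst v.
by have := congr1 odd H; rewrite addnn odd_double addn1 /= Hev.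
Qed.

Theorem lemma2 (TG TH : finType) (eG : rel TG) (eH : rel TH)
  (HG : simple_graph eG) (HH : simple_graph eH)
  (Hbal : balanced_dm_graph (direct_prod eG eH))
  (l : TG * TH -> nat) (Hl : balanced_dm_labeling (direct_prod eG eH) l)
  (g g' : TG) (h h1 h2 : TH)
  (Ht1 : twins l (g, h) (g', h)) (Ht2 : twins l (g, h1) (g, h2)) :
  let lhat := swap_labels l (g, h2) (g', h1) in
  balanced_dm_labeling (direct_prod eG eH) lhat /\ twins lhat (g, h1) (g', h1).
Proof.
move=> lhat.
set e := direct_prod eG eH.
set a := (g, h2); set b := (g', h1).
have N1 := twin_neq Hl Ht1; have N2 := twin_neq Hl Ht2.
have gg' : g != g' by apply: contraNneq N1 => ->.
have hh : h1 != h2 by apply: contraNneq N2 => ->.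
have esym : symmetric e.
  move=> x y; rewrite /e /direct_prod.
  by rewrite (proj1 HG x.1) (proj1 HH x.2).
have [Hev [[[linj lrng] [k Hk]] Hb]] := Hl.
have Eab : forall w, e w a = e w b.
  case: (pickP (e (g, h))) => [[x0 y0] E0 | E0].
  - rewrite esym /e /direct_prod /= in E0.
    case/andP: E0 => ex0 ey0.
    have EG : forall x, eG x g = eG x g'.
      move=> x; have := twin_nbrE Hl Ht1 (x, y0).
      by rewrite /e /direct_prod /= ey0 !andbT.
    have EH : forall y, eH y h1 = eH y h2.
      move=> y; have := twin_nbrE Hl Ht2 (x0, y).
      by rewrite /e /direct_prod /= ex0.
    by move=> [x y]; rewrite /e /direct_prod /= EG EH.
  - have k0 : k = 0.
      rewrite -(Hk (g, h)) /weight big_pred0 //.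
    have none : forall x y, e x y = false.
      move=> x y; apply/negP => exy.
      have := Hk x; rewrite k0 /weight (bigD1 y) //=.
      by have := lrng y; case: (l y).
    by move=> w; rewrite !none.
pose s (y : TG * TH) := if y == a then b else if y == b then a else y.
have sK : involutive s.
  move=> y; rewrite /s; case: (eqVneq y a) => [->|ya].
    by rewrite eqxx; case: eqVneq => // ->; rewrite eqxx.
  case: (eqVneq y b) => [->|yb]; first by rewrite eqxx.
  by rewrite (negbTE ya) (negbTE yb).
have sinj : injective s := inv_inj sK.
have lhE : forall y, lhat y = l (s y).
  move=> y; rewrite /lhat /swap_labels /s.
  by case: (y == a) => //; case: (y == b).
have es : forall w y, e w (s y) = e w y.
  move=> w y; rewrite /s; case: (eqVneq y a) => [->|ya]; first by rewrite Eab.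
  by case: (eqVneq y b) => [->|yb] //; rewrite Eab.
split; last first.
  rewrite /twins lhE lhE /s.
  have ha : ((g, h1) == a) = false.
    by apply/negbTE; apply: contra hh => /eqP [->].
  have hb : ((g, h1) == b) = false.
    by apply/negbTE; apply: contra gg' => /eqP [->].
  rewrite ha hb eqxx.
  have -> : (b == a) = false.
    by apply/negbTE; apply: contra gg' => /eqP [->].
  exact: Ht2.
split; first exact: Hev.
split; first split.
- split.
    by move=> x y; rewrite !lhE => /linj /sinj.
  by move=> x; rewrite lhE.
- exists k => x; rewrite -(Hk x) /weight (reindex_inj sinj) /=.
  by apply: eq_big => y; [rewrite es | rewrite lhE sK].
move=> w u ewu.
have ewsu : e w (s u) by rewrite es.
have [v' ewv' lv'] := Hb w (s u) ewsu.
exists (s v'); first by rewrite es.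
by rewrite !lhE sK lv'.
Qed.
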